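(* Let $n \ge 0$ be an integer and let $G$ be the figure-8 graph with $|V| = 7n+6$ vertices. Then for any two configurations $X_I, X_G$ of $|V|$ labeled robots on $G$ (each a bijection from the robot labels $\{1,\dots,|V|\}$ to $V$), there exists a finite sequence of valid synchronous moves taking $X_I$ to $X_G$; i.e., every multi-robot path planning instance $(G, X_I, X_G)$ on a figure-8 graph is feasible.
   Context: A figure-8 graph with parameter $n\ge 0$ consists of two distinct vertices $a,b$ joined by three internally vertex-disjoint paths having $n$, $3n+2$ and $3n+2$ internal vertices respectively (when $n=0$ the first path is the single edge $ab$); it has $7n+6$ vertices. Multi-robot path planning (MPP) on a simple, undirected, connected graph $G=(V,E)$: at each integer time step each robot occupies a vertex and a configuration is an injective map from robot labels to $V$ (here all vertices are occupied, so it is a bijection). From step $t$ to $t+1$ each robot either stays put or moves to an adjacent vertex, subject to: (i) the configuration at $t+1$ is again injective, and (ii) no two robots traverse the same edge in opposite directions. An instance $(G,X_I,X_G)$ asks for a sequence of such moves from $X_I$ to $X_G$; its makespan is the number of time steps used. *)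

(* Defs.v *)
From mathcomp Require Import all_boot.
Set Implicit Arguments. Unset Strict Implicit. Unset Printing Implicit Defensive.

(* Figure-8 graph with parameter n on vertex set 'I_(7n+6):
   a = 0, b = 1;
   path 1: a, 2, ..., n+1, b            (n internal vertices; edge ab if n = 0)
   path 2: a, n+2, ..., 4n+3, b         (3n+2 internal vertices)
   path 3: a, 4n+4, ..., 7n+5, b        (3n+2 internal vertices) *)
Definition fig8_paths (n : nat) : seq (seq nat) :=
  [:: 0 :: iota 2 n ++ [:: 1];
      0 :: iota (n + 2) (3 * n + 2) ++ [:: 1];
      0 :: iota (4 * n + 4) (3 * n + 2) ++ [:: 1]].

Definition consec (s : seq nat) (x y : nat) : bool :=
  has (fun p => (p == (x, y)) || (p == (y, x))) (zip s (behead s)).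

Definition fig8_adj (n : nat) : rel 'I_(7 * n + 6) :=
  fun x y => has (fun s => consec s x y) (fig8_paths n).

Definition valid_move (V R : finType) (adj : rel V) (X Y : {ffun R -> V}) : bool :=
  [&& injectiveb Y,
      [forall r, (Y r == X r) || adj (X r) (Y r)] &
      ~~ [exists r1, exists r2, [&& X r1 != Y r1, Y r1 == X r2 & Y r2 == X r1]]].

Definition mpp_feasible (V R : finType) (adj : rel V) (XI XG : {ffun R -> V}) : Prop :=
  exists s : seq {ffun R -> V}, path (valid_move adj) XI s && (last XI s == XG).

(* Main.v *)
Require Import Defs.
From mathcomp Require Import all_boot all_fingroup zify.
Set Implicit Arguments. Unset Strict Implicit. Unset Printing Implicit Defensive.


Lemma consec_cons x s a b : consec s a b -> consec (x :: s) a b.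
Proof. by case: s => [//|y s]; rewrite /consec /= => ->; rewrite orbT. Qed.

Lemma consec_nth s i : i.+1 < size s -> consec s (nth 0 s i) (nth 0 s i.+1).
Proof.
elim: s i => [//|x s IH] [|i] /=.
  by case: s IH => [//|y s] _ _; rewrite /consec /= eqxx.
by move=> Hi; apply: consec_cons; apply: IH.
Qed.

Lemma consecC s x y : consec s x y = consec s y x.
Proof. by rewrite /consec; apply: eq_has => p; rewrite orbC. Qed.

Definition ps m k := 0 :: iota m k ++ [:: 1].

Lemma ps_size m k : size (ps m k) = k.+2.
Proof. by rewrite /ps /= size_cat size_iota addn1. Qed.
Lemma ps_nth0 m k : nth 0 (ps m k) 0 = 0. Proof. by []. Qed.
Lemma ps_nthS m k j : j < k -> nth 0 (ps m k) j.+1 = m + j.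
Proof. by move=> Hj; rewrite /ps /= nth_cat size_iota Hj nth_iota. Qed.
Lemma ps_nthk m k : nth 0 (ps m k) k.+1 = 1.
Proof. by rewrite /ps /= nth_cat size_iota ltnn subnn. Qed.

Lemma consec_nth_eq s i x y : i.+1 < size s -> nth 0 s i = x -> nth 0 s i.+1 = y -> consec s x y.
Proof. by move=> H <- <-; apply: consec_nth. Qed.

Lemma ps_mid m k x y : m <= x -> y = x.+1 -> y < m + k -> consec (ps m k) x y.
Proof.
move=> H1 H2 H3; apply: (@consec_nth_eq _ (x - m).+1); rewrite ?ps_size ?ps_nthS; lia.
Qed.
Lemma ps_start m k x y : x = 0 -> y = m -> 0 < k -> consec (ps m k) x y.
Proof.
move=> H1 H2 H3; apply: (@consec_nth_eq _ 0); rewrite ?ps_size ?ps_nthS ?ps_nth0; lia.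
Qed.
Lemma ps_end m k x y : x.+1 = m + k -> y = 1 -> 0 < k -> consec (ps m k) x y.
Proof.
move=> H1 H2 H3; apply: (@consec_nth_eq _ k); rewrite ?ps_size ?ps_nthk; try lia.
case: k H1 H3 => [//|k] H1 H3; rewrite ps_nthS; lia.
Qed.
Lemma ps_01 m k x y : k = 0 -> x = 0 -> y = 1 -> consec (ps m k) x y.
Proof. by move=> -> -> ->. Qed.

Definition adjn n x y := has (fun s => consec s x y) (fig8_paths n).

Lemma adjnC n x y : adjn n x y -> adjn n y x.
Proof. by rewrite /adjn; apply: sub_has => s; rewrite consecC. Qed.

Lemma adj1 n x y : consec (ps 2 n) x y -> adjn n x y.
Proof. by rewrite /adjn /= => ->. Qed.
Lemma adj2 n x y : consec (ps (n+2) (3*n+2)) x y -> adjn n x y.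
Proof. by rewrite /adjn /= => ->; rewrite orbT. Qed.
Lemma adj3 n x y : consec (ps (4*n+4) (3*n+2)) x y -> adjn n x y.
Proof. by rewrite /adjn /= => ->; rewrite !orbT. Qed.

Ltac pst := first [ solve [apply: ps_mid; lia] | solve [apply: ps_start; lia]
  | solve [apply: ps_end; lia] | solve [apply: ps_01; lia] ].
Ltac adjt := first
  [ solve [apply: adj1; pst] | solve [apply: adj2; pst] | solve [apply: adj3; pst]
  | solve [apply: adjnC; apply: adj1; pst] | solve [apply: adjnC; apply: adj2; pst]
  | solve [apply: adjnC; apply: adj3; pst] ].

Definition gf (n v : nat) : nat :=
  if v == 0 then 4*n+4 else if v == 1 then 4*n+3 else if v == n+2 then 0
  else if v == 7*n+5 then 1 else if (n+2 < v) && (v <= 4*n+3) then v-1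
  else if (4*n+4 <= v) && (v < 7*n+5) then v+1 else v.
Definition bf (n v : nat) : nat :=
  if v == 1 then 7*n+5 else if v == 0 then (if n == 0 then 1 else 2)
  else if (2 <= v) && (v <= n+1) then (if v == n+1 then 1 else v+1)
  else if v == 4*n+4 then 0 else if (4*n+4 < v) && (v <= 7*n+5) then v-1 else v.
Definition af (n v : nat) : nat :=
  if v == 0 then n+2 else if v == 1 then (if n == 0 then 0 else n+1)
  else if (2 <= v) && (v <= n+1) then (if v == 2 then 0 else v-1)
  else if (n+2 <= v) && (v < 4*n+3) then v+1 else if v == 4*n+3 then 1 else v.

Record goodf n (f : nat -> nat) := GoodF {
  gf_lt : forall v, v < 7*n+6 -> f v < 7*n+6;
  gf_inj : forall u v, u < 7*n+6 -> v < 7*n+6 -> f u = f v -> u = v;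
  gf_adj : forall v, v < 7*n+6 -> f v = v \/ adjn n v (f v);
  gf_ns : forall v w, v < 7*n+6 -> f v = w -> w <> v -> f w <> v }.

Ltac goodt := split; unfold gf, bf, af;
  [ move=> v; repeat case: ifP => ?; lia
  | move=> u v; repeat case: ifP => ?; lia
  | move=> v Hv; repeat case: ifP => ?; first [left; lia | right; adjt]
  | move=> v w; repeat case: ifP => ?; lia ].

Lemma good_g n : goodf n (gf n). Proof. goodt. Qed.
Lemma good_b n : goodf n (bf n). Proof. goodt. Qed.
Lemma good_a n : goodf n (af n). Proof. goodt. Qed.

Lemma comp_id0 n v w1 w2 : v < 7*n+6 -> bf n v = w1 -> af n w1 = w2 ->
  gf n w2 = if v == 0 then 4*n+4 else if v == 4*n+4 then 0 else v.
Proof.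
unfold gf, af, bf; repeat case: ifP => ?; lia.
Qed.
Lemma comp_id n v : v < 7*n+6 ->
  gf n (af n (bf n v)) = if v == 0 then 4*n+4 else if v == 4*n+4 then 0 else v.
Proof. by move=> Hv; apply: comp_id0. Qed.

Definition reach n (X Y : {ffun 'I_(7*n+6) -> 'I_(7*n+6)}) := mpp_feasible (@fig8_adj n) X Y.

Lemma reach_refl n X : @reach n X X.
Proof. by exists [::]; rewrite /= eqxx. Qed.

Lemma reach_trans n X Y Z : @reach n X Y -> reach Y Z -> reach X Z.
Proof.
move=> [s1 /andP [H1 /eqP E1]] [s2 /andP [H2 /eqP E2]].
exists (s1 ++ s2); rewrite cat_path last_cat E1 H1 H2 /=; exact/eqP.
Qed.

Lemma reach_step n X Y : valid_move (@fig8_adj n) X Y -> reach X Y.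
Proof. by move=> H; exists [:: Y]; rewrite /= H eqxx. Qed.

Definition goodp n (s : {perm 'I_(7*n+6)}) :=
  forall X : {ffun 'I_(7*n+6) -> 'I_(7*n+6)}, injective X -> reach X [ffun r => s (X r)].

Lemma good1 n : goodp (1 : {perm 'I_(7*n+6)})%g.
Proof.
move=> X _; suff -> : [ffun r => (1 : {perm 'I_(7*n+6)})%g (X r)] = X by apply: reach_refl.
by apply/ffunP => r; rewrite ffunE perm1.
Qed.

Lemma goodM n (s t : {perm 'I_(7*n+6)}) : goodp s -> goodp t -> goodp (s * t)%g.
Proof.
move=> Hs Ht X HX; apply: reach_trans (Hs X HX) _.
have HY : injective [ffun r => s (X r)] by move=> r1 r2; rewrite !ffunE => /perm_inj/HX.
suff -> : [ffun r => (s * t)%g (X r)] = [ffun r => t ([ffun r => s (X r)] r)] by apply: Ht.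
by apply/ffunP => r; rewrite !ffunE permM.
Qed.

Lemma goodX n (s : {perm 'I_(7*n+6)}) k : goodp s -> goodp (s ^+ k)%g.
Proof.
move=> Hs; elim: k => [|k IH]; first by rewrite expg0; apply: good1.
by rewrite expgS; apply: goodM.
Qed.

Lemma goodV n (s : {perm 'I_(7*n+6)}) : goodp s -> goodp (s^-1)%g.
Proof. by move=> Hs; rewrite invg_expg; apply: goodX. Qed.

Lemma goodJ n (s t : {perm 'I_(7*n+6)}) : goodp t -> goodp s -> goodp (t ^ s)%g.
Proof. by move=> Ht Hs; rewrite conjgE; apply: goodM; [apply: goodV|apply: goodM]. Qed.

Definition mkf n f (H : goodf n f) : 'I_(7*n+6) -> 'I_(7*n+6) :=
  fun x => Ordinal (gf_lt H (ltn_ord x)).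

Lemma mkf_inj n f (H : goodf n f) : injective (mkf H).
Proof.
move=> x y /(congr1 val) /= E; apply: val_inj; exact: (gf_inj H (ltn_ord x) (ltn_ord y) E).
Qed.

Definition mkp n f (H : goodf n f) : {perm 'I_(7*n+6)} := perm (@mkf_inj n f H).

Lemma mkpE n f (H : goodf n f) x : val (mkp H x) = f (val x).
Proof. by rewrite permE. Qed.

Lemma good_mkp n f (H : goodf n f) : goodp (mkp H).
Proof.
move=> X HX; apply: reach_step; apply/and3P; split.
- by apply/injectiveP => r1 r2; rewrite !ffunE => /perm_inj/HX.
- apply/forallP => r; rewrite ffunE.
  case: (gf_adj H (ltn_ord (X r))) => E.
    by apply/orP; left; apply/eqP/val_inj; rewrite mkpE.
  by apply/orP; right; rewrite /fig8_adj mkpE.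
- apply/negP => /existsP [r1 /existsP [r2 /and3P [H1 /eqP H2 /eqP H3]]].
  move: H2 H3; rewrite !ffunE => H2 H3.
  have E2 := congr1 val H2; have E3 := congr1 val H3; rewrite mkpE in E2; rewrite mkpE in E3.
  have Hne : val (X r2) <> val (X r1).
    by move=> E; move: H1; rewrite ffunE H2 (val_inj E) eqxx.
  exact: (gf_ns H (ltn_ord (X r1)) E2 Hne E3).
Qed.

Definition T n (x y : 'I_(7*n+6)) := goodp (tperm x y).

Lemma T_refl n x : @T n x x.
Proof. by rewrite /T tperm1; apply: good1. Qed.
Lemma T_sym n x y : @T n x y -> T y x.
Proof. by rewrite /T tpermC. Qed.
Lemma T_conj n x y s : @T n x y -> goodp s -> T (s x) (s y).
Proof. by move=> H Hs; rewrite /T -tpermJ; apply: goodJ. Qed.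
Lemma T_trans n x y z : @T n x y -> T y z -> T x z.
Proof.
move=> Hxy Hyz; have [->|zx] := eqVneq z x; first exact: T_refl.
have [->|zy] := eqVneq z y; first by [].
have E : tperm x z = (tperm y z ^ tperm x y)%g.
  by rewrite tpermJ tpermR tpermD // eq_sym.
by rewrite /T E; apply: goodJ.
Qed.

Lemma lt_a n : 0 < 7*n+6. Proof. lia. Qed.
Lemma lt_q n : 4*n+4 < 7*n+6. Proof. lia. Qed.
Definition a0 n : 'I_(7*n+6) := Ordinal (lt_a n).
Definition q1 n : 'I_(7*n+6) := Ordinal (lt_q n).
Definition gp n := mkp (good_g n).
Definition bp n := mkp (good_b n).
Definition ap n := mkp (good_a n).

Lemma key n : tperm (a0 n) (q1 n) = (bp n * ap n * gp n)%g.
Proof.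
apply/permP => x; apply: val_inj.
rewrite !permM /gp /ap /bp !mkpE comp_id ?ltn_ord //.
case: tpermP.
- by move=> -> /=.
- move=> -> /=; rewrite eqxx; case: eqP => //; lia.
move=> Hx Hy.
have H1 : (val x == 0) = false by apply/negbTE/eqP => E; apply: Hx; apply: val_inj.
have H2 : (val x == 4*n+4) = false by apply/negbTE/eqP => E; apply: Hy; apply: val_inj.
by rewrite H1 H2.
Qed.

Lemma T_aq n : T (a0 n) (q1 n).
Proof.
rewrite /T key; apply: goodM; [apply: goodM|]; apply: good_mkp.
Qed.

Lemma val_iter n f (H : goodf n f) j x : val (iter j (mkp H) x) = iter j f (val x).
Proof. by elim: j => [//|j IH]; rewrite !iterS mkpE IH. Qed.

Ltac ift := unfold gf, bf, af; rewrite ?eqxx /=; repeat case: ifP => ?; lia.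

Lemma g_iter1 n i : i < 3*n+2 -> iter i.+1 (gf n) 0 = 4*n+4+i.
Proof.
elim: i => [|i IH] Hi; first by rewrite /=; ift.
by rewrite iterS IH; [ift|lia].
Qed.
Lemma g_iter1b n : iter (3*n+3) (gf n) 0 = 1.
Proof.
have -> : 3*n+3 = (3*n+1).+1.+1 by lia.
by rewrite iterS g_iter1; [ift|lia].
Qed.
Lemma g_iter2 n i : i < 3*n+2 -> iter (3*n+4+i) (gf n) 0 = 4*n+3-i.
Proof.
elim: i => [|i IH] Hi.
  have -> : 3*n+4+0 = (3*n+3).+1 by lia.
  by rewrite iterS g_iter1b; ift.
have -> : 3*n+4+i.+1 = (3*n+4+i).+1 by lia.
by rewrite iterS IH; [ift|lia].
Qed.
Lemma bf_q n : bf n (4*n+4) = 0. Proof. ift. Qed.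
Lemma b_iter n i : i < n -> iter i.+2 (bf n) (4*n+4) = 2+i.
Proof.
elim: i => [|i IH] Hi; first by rewrite /= bf_q; ift.
by rewrite iterS IH; [ift|lia].
Qed.

Lemma gp_a n : gp n (a0 n) = q1 n.
Proof. by apply: val_inj; rewrite mkpE /=; ift. Qed.
Lemma bp_q n : bp n (q1 n) = a0 n.
Proof. by apply: val_inj; rewrite mkpE /=; ift. Qed.

Lemma T_g n j : T (a0 n) ((gp n ^+ j)%g (a0 n)).
Proof.
elim: j => [|j IH]; first by rewrite expg0 perm1; apply: T_refl.
apply: T_trans IH _.
rewrite expgS permM gp_a.
apply: T_conj; [exact: T_aq | apply: goodX; apply: good_mkp].
Qed.

Lemma T_b n j : T (q1 n) ((bp n ^+ j)%g (q1 n)).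
Proof.
elim: j => [|j IH]; first by rewrite expg0 perm1; apply: T_refl.
apply: T_trans IH _.
rewrite expgS permM bp_q.
apply: T_conj; [apply: T_sym; exact: T_aq | apply: goodX; apply: good_mkp].
Qed.

Lemma T_hub n v : T (a0 n) v.
Proof.
have Hv : val v < 7*n+6 := ltn_ord v.
have Eg : forall j, iter j (gf n) 0 = val v -> T (a0 n) v.
  move=> j E; suff -> : v = (gp n ^+ j)%g (a0 n) by apply: T_g.
  by apply: val_inj; rewrite permX val_iter /= E.
have Eb : forall j, iter j (bf n) (4*n+4) = val v -> T (a0 n) v.
  move=> j E; apply: T_trans (@T_aq n) _.
  suff -> : v = (bp n ^+ j)%g (q1 n) by apply: T_b.
  by apply: val_inj; rewrite permX val_iter /= E.
have [E0|N0] := eqVneq (val v) 0; first by apply: (Eg 0).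
have [E1|N1] := eqVneq (val v) 1; first by apply: (Eg (3*n+3)); rewrite g_iter1b.
case: (ltnP (val v) (n+2)) => H1.
  apply: (Eb (val v - 2).+2); rewrite b_iter; lia.
case: (ltnP (val v) (4*n+4)) => H2.
  apply: (Eg (3*n+4 + (4*n+3 - val v))); rewrite g_iter2; lia.
apply: (Eg (val v - (4*n+4)).+1); rewrite g_iter1; lia.
Qed.

Lemma T_all n x y : @T n x y.
Proof. exact: T_trans (T_sym (@T_hub n x)) (@T_hub n y). Qed.

Lemma good_all n (s : {perm 'I_(7*n+6)}) : goodp s.
Proof.
case: (prod_tpermP s) => ts -> _.
elim: ts => [|t ts IH]; first by rewrite big_nil; apply: good1.
by rewrite big_cons; apply: goodM; [apply: T_all|].
Qed.

Theorem lemma1 (n : nat) (XI XG : {ffun 'I_(7 * n + 6) -> 'I_(7 * n + 6)}) :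
  injective XI -> injective XG -> mpp_feasible (@fig8_adj n) XI XG.
Proof.
move=> HI HG.
pose h := fun v => XG (invF HI v).
have hinj : injective h.
  by move=> u v /HG E; rewrite -(f_invF HI u) -(f_invF HI v) E.
have -> : XG = [ffun r => perm hinj (XI r)].
  by apply/ffunP => r; rewrite ffunE permE /h invF_f.
exact: (good_all (perm hinj) HI).
Qed.
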